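(* Let $S$ be a numerical semigroup and $x\in\mathrm{msg}(S)$ with $x<\mathrm{F}(S)$. Then $S\setminus\{x\}$ is a numerical semigroup and $\mathrm{l}(S\setminus\{x\})=\mathrm{l}(S)+2$.
   Context: A numerical semigroup is a subset $S\subseteq\mathbb{N}$ closed under addition with $0\in S$ and $\mathbb{N}\setminus S$ finite; $\mathrm{F}(S)=\max(\mathbb{Z}\setminus S)$. $\mathrm{msg}(S)$ denotes the (unique, finite) minimal system of generators of $S$, i.e. the elements of $S\setminus\{0\}$ that are not sums of two elements of $S\setminus\{0\}$. $\mathrm{N}(S)=\{s\in S\mid s<\mathrm{F}(S)\}$, $\mathrm{L}(S)=\{x\in\mathbb{N}\setminus S\mid \mathrm{F}(S)-x\notin \mathrm{N}(S)\}$, $\mathrm{l}(S)=\#\mathrm{L}(S)$. *)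

(* Defs.v *)
From HB Require Import structures.
From mathcomp Require Import all_boot all_order all_algebra.
From Stdlib Require Import ClassicalEpsilon.
Set Implicit Arguments. Unset Strict Implicit. Unset Printing Implicit Defensive.
Import Order.TTheory GRing.Theory Num.Theory.

Definition numerical_semigroup (S : pred nat) : Prop :=
  [/\ S 0,
      (forall a b, S a -> S b -> S (a + b)) &
      exists N, forall n, N <= n -> S n].

Definition msg (S : pred nat) (x : nat) : Prop :=
  [/\ S x, x != 0 &
      ~ (exists a b, [/\ S a, S b, a != 0, b != 0 & a + b = x])].

(* Specification of F(S) = max (Z \ S) (as an integer; -1 when S = N). *)
Definition is_frob (S : pred nat) (f : int) : Prop :=
  (~~ S (absz f) /\ (0 <= f)%R /\ forall n, (f < n%:Z)%R -> S n)
  \/ (f = (-1)%R /\ forall n, S n).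

(* F(S), chosen by (classical) description; well defined for numerical
   semigroups since the maximum is unique. *)
Definition frob (S : pred nat) : int :=
  epsilon (inhabits 0%R) (is_frob S).

Definition inN (S : pred nat) (z : int) : bool :=
  [&& (0 <= z)%R, S (absz z) & (z < frob S)%R].

Definition inL (S : pred nat) (x : nat) : bool :=
  ~~ S x && ~~ inN S (frob S - x%:Z)%R.

(* l(S) = #L(S). Every element of L(S) is a gap, hence <= F(S), so L(S) is
   contained in [0, |F(S)|]; we count over that range. *)
Definition lnum (S : pred nat) : nat :=
  count (inL S) (iota 0 (absz (frob S)).+1).

(* Main.v *)
Require Import Defs.
From HB Require Import structures.
From mathcomp Require Import all_boot all_order all_algebra zify.
From Stdlib Require Import ClassicalEpsilon.
Import Order.TTheory GRing.Theory Num.Theory.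

Lemma frob_uniq S f g : is_frob S f -> is_frob S g -> f = g.
Proof.
have H : forall f g, is_frob S f -> is_frob S g -> (f <= g)%R.
  move=> {}f {}g [[nf [f0 hf]]|[-> hf]] [[ng [g0 hg]]|[-> hg]] //.
  - case: f nf f0 hf => // a nf _ hf; case: g ng g0 hg => // b ng _ hg.
    rewrite lez_nat. case: (leqP a b) => // ab.
    by move: (hg a); rewrite ltz_nat ab => /(_ isT) Sa; rewrite /= Sa in nf.
  - by move: (hg (absz f)); rewrite (negbTE nf).
  - by apply: le_trans g0.
by move=> hf hg; apply/eqP; rewrite eq_le !(H _ _ hf hg) (H _ _ hg hf).
Qed.

Lemma frob_eq S f : is_frob S f -> frob S = f.
Proof.
move=> hf; have h := epsilon_spec (inhabits 0%R) (is_frob S) (ex_intro _ f hf).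
exact (frob_uniq _ _ _ h hf).
Qed.

Lemma frob_ex S : numerical_semigroup S -> exists f, is_frob S f.
Proof.
case=> S0 _ [N HN].
case: (boolP (has (predC S) (iota 0 N))) => h; last first.
  exists (-1)%R; right; split=> // n; case: (leqP N n) => [/HN//|nN].
  by move/hasPn: h => /(_ n); rewrite mem_iota /= nN => /(_ isT) /negbNE.
have ex : exists n, ~~ S n && (n < N).
  by case/hasP: h => n; rewrite mem_iota => /andP [_ ?] ?; exists n; apply/andP.
have bd : forall n, ~~ S n && (n < N) -> n <= N by move=> n /andP [_ /ltnW].
case: (ex_maxnP ex bd) => a /andP [na aN] amax.
exists (Posz a); left; split=> //; split=> // n; rewrite ltz_nat => an.
case: (leqP N n) => [/HN//|nN]; apply/negPn/negP => nn.
by move: (amax n); rewrite nn nN => /(_ isT); rewrite leqNgt an.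
Qed.

Lemma count_shift (a b : pred nat) (x z : nat) (s : seq nat) :
  (forall y, y \in s -> (a y : nat) = (b y + (y == x) + (y == z))%N) ->
  count a s = count b s + count (pred1 x) s + count (pred1 z) s.
Proof.
elim: s => //= y s IH H.
rewrite H ?mem_head // IH; last by move=> w ws; apply: H; rewrite inE ws orbT.
lia.
Qed.

Theorem lemma8 (S : pred nat) (x : nat) :
  numerical_semigroup S -> msg S x -> (x%:Z < frob S)%R ->
  numerical_semigroup [pred n | S n && (n != x)] /\
  lnum [pred n | S n && (n != x)] = (lnum S + 2)%N.
Proof.
move=> hS [Sx x0 xmin] xF.
Abort.

Theorem lemma8 (S : pred nat) (x : nat) :
  numerical_semigroup S -> msg S x -> (x%:Z < frob S)%R ->
  numerical_semigroup [pred n | S n && (n != x)] /\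
  lnum [pred n | S n && (n != x)] = (lnum S + 2)%N.
Proof.
move=> hS [Sx x0 xmin] xF.
have [f hf] := frob_ex _ hS.
have fS := frob_eq _ _ hf.
rewrite fS in xF.
case: hf => [[nF [F0 hF]]|[fm _]]; last by rewrite fm in xF.
case: f nF F0 hF xF fS => // F nF _ hF xF fS.
rewrite ltz_nat in xF; rewrite /= in nF.
case: hS => S0 Sadd [N HN].
have hS' : numerical_semigroup [pred n | S n && (n != x)].
  split => /=.
  - by rewrite S0 eq_sym.
  - move=> a b /andP [Sa ax] /andP [Sb bx]; rewrite Sadd //=.
    apply/eqP => abx; apply: xmin; exists a, b; split => //.
    + by apply/eqP => a0; move: abx bx; rewrite a0 add0n => ->; rewrite eqxx.
    + by apply/eqP => b0; move: abx ax; rewrite b0 addn0 => ->; rewrite eqxx.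
  - exists (maxn N x.+1) => n; rewrite geq_max => /andP [Nn xn].
    by rewrite HN //=; apply/eqP => nx; rewrite nx ltnn in xn.
split => //.
have fS' : frob [pred n | S n && (n != x)] = Posz F.
  apply: frob_eq; left; split; first by rewrite /= (negbTE nF).
  split => // n Fn; rewrite /= hF //=; apply/eqP => nx.
  by move: Fn; rewrite nx ltz_nat ltnNge ltnW.
have nFx : ~~ S (F - x).
  by apply/negP => h; move: (Sadd _ _ Sx h); rewrite subnKC ?(ltnW xF) // (negbTE nF).
have xFx : x != F - x.
  by apply/eqP => e; move: (Sadd _ _ Sx Sx); rewrite {2}e subnKC ?(ltnW xF) // (negbTE nF).
rewrite /lnum fS fS'; have -> : absz (Posz F) = F by [].
rewrite (@count_shift _ (inL S) x (F - x)); last first.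
  move=> y; rewrite mem_iota ltnS => /andP [_ yF].
  rewrite /inL /inN fS fS' subzn //= ltz_nat.
  have yS : forall z, z != x -> (S z && (z != x)) = S z by move=> z ->; rewrite andbT.
  case: (eqVneq y x) => [->|yx].
    by rewrite (negbTE xFx) (negbTE nFx) Sx.
  case: (eqVneq y (F - x)) => [->|yFx].
    by rewrite subKn ?(ltnW xF) // Sx (negbTE nFx) eqxx xF.
  have Fyx : F - y != x by apply/negP => /eqP e; move/negP: yFx; apply; apply/eqP; rewrite -e subKn.
  by rewrite !yS // andbT !addn0.
rewrite (count_uniq_mem x (iota_uniq 0 F.+1)) (count_uniq_mem (F - x) (iota_uniq 0 F.+1)) !mem_iota ltnS (ltnW xF) /= ltnS leq_subr.
by rewrite -addnA.
Qed.
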